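(* Let $q\ge 2$ be a prime power and $\xi\in\mathbb{F}_q\setminus\{0\}$. The set $$B=\bigcup_{c\in\mathbb{F}_q}N_{\Gamma_q}[(q,0,c)_1]\ \cup\ N_{\Gamma_q}[(q,q,0)_1]\ \cup\ \Big(\bigcap_{c\in\mathbb{F}_q}N^2_{\Gamma_q}[(q,0,c)_1]\cap N^2_{\Gamma_q}[(q,q,0)_1]\Big)\ \cup\ N^2_{\Gamma_q}[(q,q,\xi)_1]$$ is a perfect dominating set of $\Gamma_q$, and $|B|=2(q^2+3q+1)$.
   Context: Let $q\ge 2$ be a prime power and $\mathbb{F}_q$ the field with $q$ elements; in the vertex labels below the symbol $q$ is also used as an extra formal symbol not belonging to $\mathbb{F}_q$, and all arithmetic is in $\mathbb{F}_q$. $\Gamma_q$ is the bipartite graph with parts $V_0,V_1$, where for $r\in\{0,1\}$ the set $V_r$ consists of the vertices $(a,b,c)_r$ with $a\in\mathbb{F}_q\cup\{q\}$, $b,c\in\mathbb{F}_q$, together with the vertices $(q,q,a)_r$ with $a\in\mathbb{F}_q\cup\{q\}$. The edges are given by: for $a,b,c\in\mathbb{F}_q$, $N((a,b,c)_1)=\{(x,\,ax+b,\,a^2x+2ab+c)_0: x\in\mathbb{F}_q\}\cup\{(q,a,c)_0\}$; for $b,c\in\mathbb{F}_q$, $N((q,b,c)_1)=\{(c,b,x)_0: x\in\mathbb{F}_q\}\cup\{(q,q,c)_0\}$; for $a\in\mathbb{F}_q\cup\{q\}$, $N((q,q,a)_1)=\{(q,a,x)_0: x\in\mathbb{F}_q\}\cup\{(q,q,q)_0\}$.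 There are no other edges. For a graph $G$, $d_G$ is the distance, $N^t_G[u]=\{x: d_G(u,x)\le t\}$, $N_G[u]=N^1_G[u]$. A set $U\subseteq V(G)$ is a perfect dominating set of $G$ if every vertex $x\in V(G)\setminus U$ has exactly one neighbour in $U$. *)

(* Defs.v *)
From HB Require Import structures.
From mathcomp Require Import all_boot all_order all_algebra all_field.
Set Implicit Arguments. Unset Strict Implicit. Unset Printing Implicit Defensive.
Import GRing.Theory.
Local Open Scope ring_scope.

(* Labels of vertices of Gamma_q over a finite field F (q = #|F|).
   [option F] encodes F_q ∪ {q}: [None] stands for the formal symbol q.
   inl (a, b, c)  encodes (a,b,c) with a ∈ F_q ∪ {q}, b, c ∈ F_q;
   inr a          encodes (q,q,a) with a ∈ F_q ∪ {q}. *)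
Definition label (F : finFieldType) : finType :=
  ((option F * F * F) + option F)%type.

(* A vertex is a label together with its part r : bool (true = V_1, false = V_0). *)
Definition vertex (F : finFieldType) : finType := (label F * bool)%type.

Definition lab (F : finFieldType) (a : option F) (b c : F) : label F := inl (a, b, c).
Definition labqq (F : finFieldType) (a : option F) : label F := inr a.

(* adj1 x y : the V_1-vertex with label x is adjacent to the V_0-vertex with label y. *)
Definition adj1 (F : finFieldType) (x y : label F) : bool :=
  match x with
  | inl (Some a, b, c) =>
      match y with
      | inl (Some t, y2, y3) => (y2 == a * t + b) && (y3 == a ^+ 2 * t + 2%:R * a * b + c)
      | inl (None, y2, y3) => (y2 == a) && (y3 == c)
      | inr _ => false
      end
  | inl (None, b, c) =>
      match y with
      | inl (Some y1, y2, _) => (y1 == c) && (y2 == b)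
      | inl (None, _, _) => false
      | inr y1 => y1 == Some c
      end
  | inr a =>
      match a with
      | Some a' =>
          match y with
          | inl (None, y2, _) => y2 == a'
          | inl (Some _, _, _) => false
          | inr y1 => y1 == None
          end
      | None =>
          match y with
          | inl _ => false
          | inr _ => true   (* (q,q,x)_0 for x ∈ F_q, and (q,q,q)_0 *)
          end
      end
  end.

Definition gedge (F : finFieldType) : rel (vertex F) :=
  fun u v =>
    (u.2 && ~~ v.2 && adj1 u.1 v.1) || (v.2 && ~~ u.2 && adj1 v.1 u.1).

(* Closed t-neighbourhood N^t[u] = {x : d(u,x) <= t}, i.e. the vertices reachable
   from u by a walk of length at most t. *)
Definition ball (T : finType) (e : rel T) (t : nat) (u : T) : {set T} :=
  [set x | [exists p : (t.+1).-tuple T,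
              [exists k : 'I_(t.+1),
                 path e u (take k p) && (last u (take k p) == x)]]].

Definition perfect_dominating (T : finType) (e : rel T) (U : {set T}) : Prop :=
  forall x, x \notin U -> #|[set y in U | e x y]| = 1%N.

(* Main.v *)
Require Import Defs.
From HB Require Import structures.
From mathcomp Require Import all_boot all_order all_algebra all_field.
From mathcomp Require Import ring zify.
Import GRing.Theory.
Local Open Scope ring_scope.

Section PartA.
Set Implicit Arguments. Unset Strict Implicit.
Local Close Scope ring_scope.


Lemma ballP (T : finType) (e : rel T) t u x :
  reflect (exists s : seq T, [/\ (size s <= t)%N, path e u s & last u s = x])
          (x \in ball e t u).
Proof.
rewrite inE; apply: (iffP existsP).
  case=> p /existsP [k /andP [hp /eqP hl]]; exists (take k p); split => //.
  by rewrite size_take_min; apply: leq_trans (geq_minl _ _) _; rewrite -ltnS ltn_ord.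
case=> s [hs hp hl].
have hsz : size (take t.+1 (s ++ nseq t.+1 u)) == t.+1.
  by rewrite size_takel // size_cat size_nseq leq_addl.
exists (Tuple hsz); apply/existsP; exists (Ordinal (hs : (size s < t.+1)%N)).
by rewrite /= take_takel ?(leqW hs) // (take_size_cat _ (erefl (size s))) hp hl eqxx.
Qed.

Lemma ball1 (T : finType) (e : rel T) u x :
  (x \in ball e 1 u) = (x == u) || e u x.
Proof.
apply/ballP/idP.
  case=> [[|y [|z s]]] [//= hs hp hl]; first by rewrite hl eqxx.
  by move: hp; rewrite hl andbT => ->; rewrite orbT.
case/orP=> [/eqP ->|h]; first by exists [::].
by exists [:: x]; rewrite /= h.
Qed.

Lemma ball2 (T : finType) (e : rel T) u x :
  (x \in ball e 2 u) = [|| x == u, e u x | [exists y, e u y && e y x]].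
Proof.
apply/ballP/idP.
  case=> [[|y [|z [|w s]]]] [//= hs hp hl]; first by rewrite hl eqxx.
    by move: hp; rewrite hl andbT => ->; rewrite orbT.
  move: hp; rewrite hl andbT => /andP [h1 h2].
  by apply/orP; right; apply/orP; right; apply/existsP; exists y; rewrite h1.
case/or3P=> [/eqP ->|h|/existsP [y /andP [h1 h2]]]; first by exists [::].
  by exists [:: x]; rewrite /= h.
by exists [:: y; x]; rewrite /= h1 h2.
Qed.

Lemma sum_option (T : finType) (f : option T -> nat) :
  (\sum_(i : option T) f i = f None + \sum_(t : T) f (Some t))%N.
Proof.
by rewrite ![index_enum _]unlock [@Finite.enum in LHS]unlock /= big_cons big_map.
Qed.

End PartA.

Section PartB.
Set Implicit Arguments. Unset Strict Implicit.

Definition inB (F : finFieldType) (xi : F) (v : vertex F) : bool :=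
  match v with
  | (inl (None, b, c), true) => b == 0
  | (inl (Some a, b, c), true) => (a == 0) && (b == 0) || (a == xi)
  | (inr _, true) => true
  | (inl (Some a, b, c), false) => b == 0
  | (inl (None, b, c), false) => (b == 0) || (b == xi)
  | (inr _, false) => true
  end.

Ltac simpF := rewrite ?(mul0r, mulr0, add0r, addr0, expr0n, mulr0n, mul1r, mulr1, eqxx) /=.
Ltac crush := rewrite /gedge /labqq /lab /= ?andbT ?orbF; simpF;
  repeat first [ move=> /andP [] | move=> /eqP; simpF; move=> ?; subst ]; simpF;
  rewrite ?eqxx ?orbT ?andbT //.

Lemma ball1R (T : finType) (e : rel T) u x :
  (x \in ball e 1 u) = (x == u) || e u x.
Proof. exact: ball1. Qed.
Lemma ball2R (T : finType) (e : rel T) u x :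
  (x \in ball e 2 u) = [|| x == u, e u x | [exists y, e u y && e y x]].
Proof. exact: ball2. Qed.

Lemma B_sub (F : finFieldType) (xi : F) (v : vertex F) :
  v \in ball (@gedge F) 2 (labqq (Some xi), true) -> inB xi v.
Proof.
rewrite ball2R => /or3P [/eqP ->|h|/existsP [y /andP [h1 h2]]] //.
  by case: v h => [[[[[a|] b] c]|[a|]] []] //=; crush.
case: v y h1 h2 => [[[[[a|] b] c]|[a|]] []] [[[[[a'|] b'] c']|[a'|]] []] //=; crush.
Qed.

Definition Bset (F : finFieldType) (xi : F) : {set vertex F} :=
    (\bigcup_(c : F) ball (@gedge F) 1 (lab None 0 c, true))
    :|: ball (@gedge F) 1 (labqq (Some 0), true)
    :|: ((\bigcap_(c : F) ball (@gedge F) 2 (lab None 0 c, true))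
          :&: ball (@gedge F) 2 (labqq (Some 0), true))
    :|: ball (@gedge F) 2 (labqq (Some xi), true).

Ltac ed := rewrite /gedge /lab /labqq /=; simpF.

Lemma B_eq (F : finFieldType) (xi : F) (hxi : xi != 0) : Bset xi = [set v | inB xi v].
Proof.
apply/setP => v; rewrite inE; apply/idP/idP.
  case/setUP => [|/B_sub //]; case/setUP => [|/setIP [/bigcapP h0 h2]]; first case/setUP.
  - case/bigcupP => c _; rewrite ball1R => /orP [/eqP -> //=|].
    by case: v => [[[[[a|] b] c']|[a|]] []] //=; crush.
  - rewrite ball1R => /orP [/eqP -> //=|].
    by case: v => [[[[[a|] b] c']|[a|]] []] //=; crush.
  move: (h0 0 isT) h2; clear h0; rewrite !ball2R.
  case/or3P => [/eqP -> //=|h|/existsP [y /andP [h1 h1']]].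
    by case: v h => [[[[[a|] b] c']|[a|]] []] //=; crush.
  case/or3P => [/eqP E|h|/existsP [z /andP [h2 h2']]].
    by move: h1'; rewrite E; case: y h1 => [[[[[a|] b] c']|[a|]] []] //=; crush.
    by case: v h h1 h1' => [[[[[a|] b] c']|[a|]] []] //=; crush.
  case: v h1' h2' => [[[[[a|] b] c']|[a|]] []] //=;
  case: y h1 => [[[[[a1|] b1] c1]|[a1|]] []] //=;
  case: z h2 => [[[[[a2|] b2] c2]|[a2|]] []] //=; crush.
rewrite /Bset; case: v => [[[[[a|] b] c]|[a|]] []] /=.
- case/orP => [/andP [/eqP -> /eqP ->] | /eqP ->].
    apply/setUP; left; apply/setUP; right; apply/setIP; split.
      apply/bigcapP => c' _; rewrite ball2R; apply/or3P; apply: Or33.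
      by apply/existsP; exists (inl (Some c', 0, c), false); ed.
    rewrite ball2R; apply/or3P; apply: Or33.
    by apply/existsP; exists (inl (None, 0, c), false); ed.
  apply/setUP; right; rewrite ball2R; apply/or3P; apply: Or33.
  by apply/existsP; exists (inl (None, xi, c), false); ed.
- move/eqP ->; apply/setUP; left; apply/setUP; left; apply/setUP; left.
  by apply/bigcupP; exists a => //; rewrite ball1R; apply/orP; right; ed.
- move/eqP ->; apply/setUP; left; apply/setUP; left; apply/setUP; left.
  by apply/bigcupP; exists c => //; rewrite ball1R eqxx.
- case/orP => /eqP ->.
    apply/setUP; left; apply/setUP; left; apply/setUP; right.
    by rewrite ball1R; apply/orP; right; ed.
  by apply/setUP; right; rewrite ball2R; apply/or3P; apply: Or32; ed.
- move=> _; apply/setUP; right; rewrite ball2R; apply/or3P; apply: Or33.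
  by apply/existsP; exists (inr None, false); ed.
- move=> _; apply/setUP; left; apply/setUP; left; apply/setUP; left.
  by apply/bigcupP; exists a => //; rewrite ball1R; apply/orP; right; ed.
- move=> _; apply/setUP; right; rewrite ball2R; apply/or3P; apply: Or33.
  by apply/existsP; exists (inr None, false); ed.
- move=> _; apply/setUP; left; apply/setUP; left; apply/setUP; right.
  by rewrite ball1R; apply/orP; right; ed.
Qed.

Lemma inl_eqE (A B : eqType) (x y : A) : (@inl A B x == inl y) = (x == y).
Proof. by apply/eqP/eqP => [[]|->]. Qed.
Lemma inr_eqE (A B : eqType) (x y : B) : (@inr A B x == inr y) = (x == y).
Proof. by apply/eqP/eqP => [[]|->]. Qed.
Lemma Some_eqE (A : eqType) (x y : A) : (Some x == Some y) = (x == y).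
Proof. by apply/eqP/eqP => [[]|->]. Qed.

Ltac fin := try done; try match goal with H : is_true (?x != ?x) |- _ => by rewrite eqxx in H end.
Ltac yc := rewrite /gedge /= ?(xpair_eqE, inl_eqE, inr_eqE, Some_eqE, eqxx) /=; simpF;
  rewrite ?andbF ?andFb ?orbF; first [ apply/negbTE/negP | apply/idP/idP ]; crush; fin.

Lemma pd1 (F : finFieldType) (xi : F) (hxi : xi != 0) (x : vertex F) :
  ~~ inB xi x -> #|[set y in [set v | inB xi v] | gedge x y]| = 1%N.
Proof.
case: x => [[[[[a|] b] c]|[a|]] []] //=.
- rewrite negb_or negb_and => /andP [ha hxa].
  case: (eqVneq a 0) ha => [-> /= hb|ha _].
    suff -> : [set y in [set v | inB xi v] | gedge (inl (Some 0, b, c), true) y]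
      = [set (inl (None, 0, c), false)] by rewrite cards1.
    apply/setP => y; rewrite !inE.
    by case: y => [[[[[a1|] b1] c1]|[a1|]] []] //=; yc.
  have key : forall s : F, (0 == a * s + b) = (s == - b / a).
    move=> s; apply/eqP/eqP => [h|->].
      have -> : b = 0 - a * s by rewrite h; ring.
      by field.
    by field.
  suff -> : [set y in [set v | inB xi v] | gedge (inl (Some a, b, c), true) y]
      = [set (inl (Some (- b / a), 0, a ^+ 2 * (- b / a) + 2%:R * a * b + c), false)].
    by rewrite cards1.
  apply/setP => y; rewrite !inE.
  case: y => [[[[[a1|] b1] c1]|[a1|]] []] //=; try by yc.
    rewrite /gedge /= ?(xpair_eqE, inl_eqE, inr_eqE, Some_eqE) /=.
    rewrite eqxx orbF !andbT.
    case: (eqVneq b1 0) => [->|hb1] /=; last by rewrite andbF.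
    rewrite key andbT; case: (eqVneq a1 (- b / a)) => [->|] //=.
  rewrite /gedge /= ?(xpair_eqE, inl_eqE, inr_eqE, Some_eqE) /= ?orbF.
  apply/negbTE/negP => /andP [h /andP [/eqP e _]].
  by move: h; rewrite e (negbTE ha) (negbTE hxa).
- move=> hb.
  suff -> : [set y in [set v | inB xi v] | gedge (inl (Some a, b, c), false) y]
      = [set (inl (Some xi, b - xi * a, c - xi ^+ 2 * a - 2%:R * xi * (b - xi * a)), true)] by rewrite cards1.
  apply/setP => y; rewrite !inE.
  case: y => [[[[[a1|] b1] c1]|[a1|]] []] //=; try by yc.
  rewrite /gedge /= ?(xpair_eqE, inl_eqE, inr_eqE, Some_eqE, eqxx) /= andbT.
  case: (eqVneq a1 xi) => [->|hne] /=.
    rewrite orbT /=; apply/idP/idP => /andP [/eqP h1 /eqP h2]; apply/andP; split; apply/eqP.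
    - by subst b; ring.
    - by subst b c; ring.
    - by subst b1; ring.
    - by subst b1 c1; ring.
  rewrite orbF; apply/negbTE/negP => /and3P [/andP [/eqP h0 /eqP h1] /eqP h2 _].
  by move: hb; rewrite h2 h0 h1; simpF.
- move=> hb.
  suff -> : [set y in [set v | inB xi v] | gedge (inl (None, b, c), true) y]
      = [set (inr (Some c), false)] by rewrite cards1.
  apply/setP => y; rewrite !inE.
  case: y => [[[[[a1|] b1] c1]|[a1|]] []] //=; try by yc.
- rewrite negb_or => /andP [hb hbx].
  suff -> : [set y in [set v | inB xi v] | gedge (inl (None, b, c), false) y]
      = [set (inr (Some b), true)] by rewrite cards1.
  apply/setP => y; rewrite !inE.
  case: y => [[[[[a1|] b1] c1]|[a1|]] []] //=; try by yc.
  rewrite /gedge /= ?(xpair_eqE, inl_eqE, inr_eqE, Some_eqE) /=.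
  apply/negbTE/negP => /and3P [h /eqP ha1 _].
  by move: h; rewrite -ha1 (negbTE hb) (negbTE hbx).
Qed.

End PartB.

Section PartC.
Set Implicit Arguments. Unset Strict Implicit.
Local Close Scope ring_scope.

Lemma sum_pair (I J : finType) (f : I * J -> nat) :
  \sum_(p : I * J) f p = \sum_(i : I) \sum_(j : J) f (i, j).
Proof. by rewrite pair_big; apply: eq_bigr => -[]. Qed.

Lemma sum_sum (I J : finType) (f : I + J -> nat) :
  \sum_(p : I + J) f p = \sum_(i : I) f (inl i) + \sum_(j : J) f (inr j).
Proof. exact: big_sumType. Qed.

Lemma sum_eq1 (T : finType) (t : T) : \sum_(x : T) (x == t : nat) = 1.
Proof. by rewrite (bigD1 t) //= eqxx big1 // => i /negbTE ->. Qed.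

Lemma sum_const (T : finType) (n : nat) : \sum_(x : T) n = #|T| * n.
Proof. by rewrite sum_nat_const. Qed.

Lemma count_B (F : finFieldType) (xi : F) (hxi : xi != 0%R) :
  #|[set v | inB xi v]| = 2 * (#|F| ^ 2 + 3 * #|F| + 1).
Proof.
rewrite -sum1dep_card big_mkcond /=.
rewrite (eq_bigr (fun v => (inB xi v : nat))); last by move=> v _; case: inB.
rewrite sum_pair /label.
under eq_bigr do rewrite big_bool.
rewrite sum_sum sum_pair sum_pair sum_option sum_option /=.
have hx0 : (0%R == xi) = false by rewrite eq_sym (negbTE hxi).
have L1 : forall b : F, ((b == 0%R) + ((b == 0%R) || (b == xi)) = (b == 0%R) + (b == 0%R) + (b == xi))%N.
  by move=> b; case: (eqVneq b 0%R) => [->|]; rewrite ?hx0 //= addnA.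
have L2 : forall a b : F, (((a == 0%R) && (b == 0%R) || (a == xi)) + (b == 0%R) =
     (a == 0%R) * (b == 0%R) + (a == xi) + (b == 0%R))%N.
  by move=> a b; case: (eqVneq a 0%R) => [->|] /=; rewrite ?hx0 //; case: (b == 0%R).
have EA : \sum_(b : F) \sum_(c : F) ((b == 0%R) + ((b == 0%R) || (b == xi))) = 3 * #|F|.
  under eq_bigr do rewrite sum_const L1.
  by rewrite -big_distrr /= !big_split /= !sum_eq1 mulnC.
have EB : \sum_(a : F) \sum_(b : F) \sum_(c : F)
     ((a == 0%R) && (b == 0%R) || (a == xi) + (b == 0%R)) = #|F| * (2 * #|F| + 1).
  under eq_bigr do under eq_bigr do rewrite sum_const L2.
  under eq_bigr do rewrite -big_distrr /=.
  rewrite -big_distrr /=; congr (_ * _).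
  under eq_bigr do rewrite !big_split /=.
  under eq_bigr do rewrite -big_distrr /= sum_eq1 muln1 sum_const.
  rewrite !big_split /= sum_eq1 -big_distrr /= sum_eq1 sum_const.
  set q := #|F|. lia.
rewrite EA EB sum_const.
set q := #|F|; rewrite -mulnn; nia.
Qed.

End PartC.

Theorem theorem2 (F : finFieldType) (xi : F) (hxi : xi != 0) :
  let B : {set vertex F} :=
    (\bigcup_(c : F) ball (@gedge F) 1 (lab None 0 c, true))
    :|: ball (@gedge F) 1 (labqq (Some 0), true)
    :|: ((\bigcap_(c : F) ball (@gedge F) 2 (lab None 0 c, true))
          :&: ball (@gedge F) 2 (labqq (Some 0), true))
    :|: ball (@gedge F) 2 (labqq (Some xi), true) in
  perfect_dominating (@gedge F) B /\
  #|B| = (2 * (#|F| ^ 2 + 3 * #|F| + 1))%N.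
Proof.
move=> B.
have EB : B = [set v | inB xi v] := B_eq hxi.
split; last by rewrite EB count_B.
by move=> x; rewrite EB inE => hx; exact: pd1.
Qed.
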